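(* Let $k$ be a positive integer and $n_0,\ldots,n_{k-1}$ positive integers, with indices read modulo $k$. For each $j\in\{0,\ldots,k-1\}$ let $A^{(j)}$ be a real $n_j\times n_{j+1}$ matrix, and suppose the signed digraph $G_{A^{(0)}A^{(1)}\cdots A^{(k-1)}}$ is e-cycle-free. Then every matrix in $\mathcal{Q}(A^{(0)})\mathcal{Q}(A^{(1)})\cdots\mathcal{Q}(A^{(k-1)})$ is a $P_0$-matrix.
   Context: Indices $j$ are taken modulo $k$. For a real matrix $M$, $\mathcal{Q}(M)$ is the set of real matrices $X$ of the same dimensions with $M_{ij}>0\Rightarrow X_{ij}>0$, $M_{ij}<0\Rightarrow X_{ij}<0$, $M_{ij}=0\Rightarrow X_{ij}=0$, and $\mathcal{Q}(A^{(0)})\cdots\mathcal{Q}(A^{(k-1)})=\{B^{(0)}\cdots B^{(k-1)} : B^{(j)}\in\mathcal{Q}(A^{(j)})\}$. The signed digraph $G=G_{A^{(0)}\cdots A^{(k-1)}}$ has vertex set the disjoint union of $V_0,\ldots,V_{k-1}$ with $V_j=\{V_j^1,\ldots,V_j^{n_j}\}$; there is a directed edge from $V_j^r$ to $V_{j+1}^s$ iff $(A^{(j)})_{rs}\neq 0$, with the sign of $(A^{(j)})_{rs}$; no other edges (loops allowed when $k=1$). Every directed cycle has length a multiple of $k$; a directed cycle with $kr_1$ edges, $r_2$ of them negative, is an e-cycle if $(-1)^{r_1+r_2}=1$ and an o-cycle otherwise; $G$ is e-cycle-free if it has no e-cycle. A $P_0$-matrix is a real square matrix all of whose principal minors are nonnegative.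 *)

(* Defs.v *)
From HB Require Import structures.
From mathcomp Require Import all_boot all_order all_algebra.
From mathcomp Require Export reals.
Set Implicit Arguments. Unset Strict Implicit. Unset Printing Implicit Defensive.
Import Order.TTheory GRing.Theory Num.Theory.
Local Open Scope ring_scope.

Definition idx (k : nat) (hk : (0 < k)%N) (i : nat) : 'I_k :=
  Ordinal (ltn_pmod i hk).

Definition nextl (k : nat) (hk : (0 < k)%N) (j : 'I_k) : 'I_k := idx hk j.+1.

Lemma idxS (k : nat) (hk : (0 < k)%N) (m : nat) :
  nextl hk (idx hk m) = idx hk m.+1.
Proof. by apply: val_inj => /=; rewrite -addn1 modnDml addn1. Qed.

Lemma idxk (k : nat) (hk : (0 < k)%N) : idx hk k = idx hk 0.
Proof. by apply: val_inj => /=; rewrite modnn mod0n. Qed.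

Section Defs.
Variables (R : realType) (k : nat) (hk : (0 < k)%N) (n : 'I_k -> nat).

Definition inQ (p q : nat) (M X : 'M[R]_(p, q)) : Prop :=
  forall i j, (0 < M i j -> 0 < X i j) /\ (M i j < 0 -> X i j < 0)
              /\ (M i j = 0 -> X i j = 0).

Fixpoint chain (B : forall j : 'I_k, 'M[R]_(n j, n (nextl hk j))) (m : nat)
  : 'M[R]_(n (idx hk 0), n (idx hk m)) :=
  match m with
  | 0 => 1%:M
  | m'.+1 => chain B m' *m castmx (erefl, congr1 n (idxS hk m')) (B (idx hk m'))
  end.

Definition prodmx (B : forall j : 'I_k, 'M[R]_(n j, n (nextl hk j)))
  : 'M[R]_(n (idx hk 0)) :=
  castmx (erefl, congr1 n (idxk hk)) (chain B k).

Definition principal_submx (m : nat) (M : 'M[R]_m) (S : {set 'I_m})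
  : 'M[R]_#|S| := mxsub (@enum_val _ (mem S)) (@enum_val _ (mem S)) M.

Definition P0 (m : nat) (M : 'M[R]_m) : Prop :=
  forall S : {set 'I_m}, 0 <= \det (principal_submx M S).

Definition vertex := {j : 'I_k & 'I_(n j)}.

Definition entry (A : forall j : 'I_k, 'M[R]_(n j, n (nextl hk j)))
  (j : 'I_k) (r s : nat) : R :=
  match @insub _ (fun x => x < n j)%N _ r, @insub _ (fun x => x < n (nextl hk j))%N _ s with
  | Some r', Some s' => A j r' s'
  | _, _ => 0
  end.

Definition weight (A : forall j : 'I_k, 'M[R]_(n j, n (nextl hk j)))
  (u v : vertex) : R :=
  if tag v == nextl hk (tag u) then entry A (tag u) (val (tagged u)) (val (tagged v))
  else 0.

Definition arc A (u v : vertex) : bool := weight A u v != 0.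

Definition dicycle A (c : seq vertex) : bool :=
  [&& c != [::], uniq c & cycle (arc A) c].

Definition cycle_arcs (c : seq vertex) : seq (vertex * vertex) := zip c (rot 1 c).

Definition neg_arcs A (c : seq vertex) : nat :=
  count (fun e => weight A e.1 e.2 < 0) (cycle_arcs c).

(* e-cycle: length k*r1 with r2 negative edges and (-1)^(r1+r2) = 1 *)
Definition e_cycle A (c : seq vertex) : Prop :=
  dicycle A c /\ ((-1 : R) ^+ (size c %/ k + neg_arcs A c) = 1).

Definition e_cycle_free A : Prop := forall c, ~ e_cycle A c.

End Defs.

(* Main.v *)
Require Import Defs.
From HB Require Import structures.
From mathcomp Require Import all_boot all_order all_algebra perm.
From mathcomp Require Import reals.
From mathcomp Require Import zify.
Import Order.TTheory GRing.Theory Num.Theory.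
Local Open Scope ring_scope.
Set Implicit Arguments. Unset Strict Implicit. Unset Printing Implicit Defensive.

Lemma window k (j : nat) b : (j < k)%N ->
  count (fun i => (i %% k)%N == j) (iota b k) = 1%N.
Proof.
move=> jk; elim: b => [|b IH].
  rewrite (eq_in_count (a2 := pred1 j)); last first.
    by move=> i; rewrite mem_iota add0n => /andP [_ H]; rewrite modn_small.
  by rewrite count_uniq_mem ?iota_uniq // mem_iota jk.
have E : iota b k.+1 = b :: iota b.+1 k by [].
have E2 : iota b k.+1 = rcons (iota b k) (b + k).
  by rewrite -addn1 iotaD cats1.
move: (congr1 (count (fun i => (i %% k)%N == j)) E).
rewrite E2 -cats1 count_cat IH /= addn0 modnDr => H.
lia.
Qed.

Lemma window_q k (j : nat) q a : (j < k)%N ->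
  count (fun i => (i %% k)%N == j) (iota a (q * k)) = q.
Proof.
move=> jk; elim: q a => [|q IH] a //.
by rewrite mulSn iotaD count_cat window // IH.
Qed.

Lemma traject_map (T : Type) (f : T -> T) x L :
  map f (traject f x L) = traject f (f x) L.
Proof. by elim: L x => //= L IH x; rewrite IH. Qed.

Lemma traject_rot (T : Type) (f : T -> T) x L :
  iter L f x = x -> rot 1 (traject f x L) = map f (traject f x L).
Proof.
case: L => // L H; rewrite traject_map [traject f x _]/= rot1_cons trajectSr.
by rewrite -iterSr H.
Qed.

Lemma traject_cycle (T : eqType) (f : T -> T) x L :
  (0 < L)%N -> iter L f x = x -> fcycle f (traject f x L).
Proof.
case: L => // L _ H; rewrite /= rcons_path fpath_traject last_traject /=.
by rewrite -iterS H.
Qed.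

Lemma traject_iter (T : Type) (f : T -> T) x L :
  traject f x L = [seq iter i f x | i <- iota 0 L].
Proof.
elim: L x => //= L IH x; rewrite IH -[in RHS](addn0 1%N) iotaDl -map_comp.
by congr (_ :: _); apply: eq_map => i /=; rewrite -iterSr.
Qed.

Section LC.
Variables (k : nat) (hk : (0 < k)%N).

Lemma iter_nextl (a : 'I_k) i : iter i (nextl hk) a = idx hk (a + i).
Proof.
elim: i => [|i IH] /=.
  by apply: val_inj; rewrite /= addn0 modn_small.
by rewrite IH idxS addnS.
Qed.

Lemma layer_count (t : seq 'I_k) (j : 'I_k) : t != [::] ->
  fcycle (nextl hk) t -> count (pred1 j) t = (size t %/ k)%N.
Proof.
case: t => [//|a t'] _; rewrite [cycle _ _]/= rcons_path => /andP [/fpathP [L ->] Hl].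
rewrite last_traject in Hl; move/eqP: Hl; rewrite -iterS => Hl.
have Et : a :: traject (nextl hk) (nextl hk a) L = traject (nextl hk) a L.+1 by [].
rewrite Et size_traject traject_iter count_map.
rewrite iter_nextl in Hl.
have Hd : (k %| L.+1)%N.
  have := congr1 val Hl; rewrite /= => H.
  have : (a + L.+1 == a + 0 %[mod k])%N by rewrite H addn0 modn_small.
  by rewrite eqn_modDl mod0n.
case/dvdnP: Hd => q Hq; rewrite Hq mulnK //.
rewrite (eq_count (a2 := fun i => ((i + a) %% k)%N == j :> nat)); last first.
  by move=> i /=; rewrite iter_nextl /= addnC.
rewrite -(count_map (fun i => i + a)%N (fun i => (i %% k)%N == j :> nat)).
have -> : [seq (i + a)%N | i <- iota 0 (q * k)] = iota a (q * k).
  by rewrite -[in RHS](addn0 a) iotaDl; apply: eq_map => i; rewrite addnC.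
exact: window_q.
Qed.
End LC.

Section Gen.
Variable R : realType.

Lemma det_unip N (M : 'M[R]_N) : (forall i, M i i = 1) ->
  (forall s : 'S_N, s != 1%g -> exists i, M i (s i) = 0) -> \det M = 1.
Proof.
move=> Hd Hs; rewrite /determinant (bigD1 (1%g : 'S_N)) //= [X in _ + X]big1.
  rewrite odd_perm1 expr0 mul1r addr0; apply: big1 => i _; by rewrite perm1 Hd.
move=> s /Hs [i Hi]; by rewrite (bigD1 i) //= Hi mul0r mulr0.
Qed.

Lemma sign_sum (I : finType) (P : pred I) (f : I -> nat) :
  (-1) ^+ (\sum_(i | P i) f i)%N = \prod_(i | P i) ((-1) ^+ f i : R).
Proof. by apply: (big_morph (fun n => (-1) ^+ n)) => [x y|]; rewrite ?exprD. Qed.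

Lemma det_ge0_orbits N (M : 'M[R]_N) :
  (forall (s : 'S_N) x,
     0 <= (-1) ^+ (#|porbit s x|.+1) * \prod_(i in porbit s x) M i (s i)) ->
  0 <= \det M.
Proof.
move=> H; rewrite /determinant; apply: sumr_ge0 => s _.
rewrite /odd_perm.
have E1 : \prod_i M i (s i) = \prod_(o in porbits s) \prod_(i | porbit s i == o) M i (s i).
  by rewrite (partition_big_imset (porbit s)).
have E2 : #|'I_N| = (\sum_(o in porbits s) \sum_(i | porbit s i == o) 1)%N.
  by rewrite -sum1_card (partition_big_imset (porbit s)).
have E3 : #|porbits s| = (\sum_(o in porbits s) 1)%N by rewrite sum1_card.
have -> : (-1) ^+ (odd #|'I_N| (+) odd #|porbits s|) = 
   (-1) ^+ (\sum_(o in porbits s) (\sum_(i | porbit s i == o) 1).+1)%N :> R.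
  have -> : (\sum_(o in porbits s) (\sum_(i | porbit s i == o) 1).+1 =
     \sum_(o in porbits s) (\sum_(i | porbit s i == o) 1) + \sum_(o in porbits s) 1)%N.
    by rewrite -big_split /=; apply: eq_bigr => o _; rewrite addn1.
  by rewrite -E2 -E3 -[RHS]signr_odd oddD.
rewrite sign_sum E1 -big_split /=; apply: prodr_ge0 => o /imsetP [x _ ->].
have HP : forall i, (porbit s i == porbit s x) = (i \in porbit s x) by move=> i; rewrite eq_porbit_mem.
rewrite (eq_bigl _ _ HP) sum1_card (eq_bigl _ _ HP); exact: H.
Qed.
Lemma prod_sgn (I : Type) (s : seq I) (b : I -> bool) :
  \prod_(i <- s) (if b i then 1 else -1 : R) = (-1) ^+ (count (fun i => ~~ b i) s).
Proof.
elim: s => [|x s IH]; first by rewrite big_nil.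
by rewrite big_cons IH /=; case: (b x); rewrite /= ?mul1r // exprS.
Qed.

Lemma prod_abs (I : Type) (s : seq I) (f : I -> R) :
  \prod_(i <- s) f i = (-1) ^+ (count (fun i => f i < 0) s) * \prod_(i <- s) `|f i|.
Proof.
elim: s => [|x s IH]; first by rewrite !big_nil mulr1.
rewrite !big_cons IH /= exprD {1}(numEsign (f x)).
by rewrite !mulrA; congr (_ * _); rewrite -!mulrA; congr (_ * _); rewrite mulrC.
Qed.

End Gen.

Section Main.
Variables (R : realType) (k : nat) (hk : (0 < k)%N) (n : 'I_k -> nat).
Hypothesis hn : forall j, (0 < n j)%N.
Variable B : forall j : 'I_k, 'M[R]_(n j, n (nextl hk j)).
Variable S : {set 'I_(n (idx hk 0))}.

Notation V := (vertex n).

Definition mE p q (M : 'M[R]_(p,q)) (a b : nat) : R :=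
  match @insub _ (fun x => x < p)%N _ a, @insub _ (fun x => x < q)%N _ b with
  | Some a', Some b' => M a' b' | _, _ => 0 end.
Arguments mE {p q} M a b.

Lemma mEE p q (M : 'M[R]_(p,q)) (a : 'I_p) (b : 'I_q) : mE M a b = M a b.
Proof. by rewrite /mE !valK. Qed.

Lemma mE_out p q (M : 'M[R]_(p,q)) a b : ~~ ((a < p) && (b < q))%N -> mE M a b = 0.
Proof.
rewrite /mE negb_and => /orP [H|H].
  by rewrite insubF // (negbTE H).
case: insubP => [? _ _|]; last by [].
by rewrite insubF // (negbTE H).
Qed.

Lemma entry_mE (A : forall j : 'I_k, 'M[R]_(n j, n (nextl hk j))) j r s :
  entry A j r s = mE (A j) r s.
Proof. by []. Qed.

Definition s0 : 'I_(n (idx hk 0)) := Ordinal (hn _).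
Definition vn (u : V) : nat := val (tagged u).
Definition inS (u : V) : bool := (tag u == idx hk 0) && (insubd s0 (vn u) \in S).

Lemma inS_tag0 (x : 'I_(n (idx hk 0))) : inS (Tagged (fun j => 'I_(n j)) x) = (x \in S).
Proof. by rewrite /inS /= eqxx /vn /= valKd. Qed.

Lemma inS_tag u : inS u -> tag u = idx hk 0.
Proof. by case/andP => /eqP. Qed.

Definition Sv := [set u : V | inS u].
Definition Rset := ~: Sv.
Definition N := (#|S| + #|Rset|)%N.

Definition vert (i : 'I_N) : V :=
  match split i with
  | inl a => Tagged (fun j => 'I_(n j)) (@enum_val _ (mem S) a)
  | inr b => @enum_val _ (mem Rset) b
  end.

Lemma vert_inj : injective vert.
Proof.
move=> i j; rewrite /vert.
case: (split i) (splitK i) => [a|b] <-; case: (split j) (splitK j) => [a'|b'] <- /=.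
- by move=> E0; have E := eq_from_Tagged E0; rewrite (enum_val_inj E).
- move=> E; have := enum_valP b'; rewrite -E !inE inS_tag0.
  by rewrite (enum_valP a).
- move=> E; have := enum_valP b; rewrite E !inE inS_tag0.
  by rewrite (enum_valP a').
- by move=> E; rewrite (enum_val_inj E).
Qed.

Lemma vert_bij : bijective vert.
Proof.
apply: inj_card_bij; first exact: vert_inj.
rewrite card_ord /N -(cardsC Sv) leq_add2r.
have -> : #|S| = #|[set Tagged (fun j => 'I_(n j)) x | x in S]|.
  by rewrite card_imset //; move=> x y E0; exact: eq_from_Tagged E0.
apply: subset_leq_card; apply/subsetP => u; rewrite inE.
case: u => j r; case/andP => /= /eqP Ej; subst j; rewrite /vn /= valKd => Hr.
exact: imset_f.
Qed.

Lemma sum_vert (F : V -> R) (P : pred V) :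
  \sum_(u | P u) F u = \sum_(i | P (vert i)) F (vert i).
Proof.
apply: reindex; case: vert_bij => g H1 H2; exists g => x _; [exact: H1|exact: H2].
Qed.

Lemma sum_layer (J : 'I_k) (F : V -> R) :
  \sum_(u | tag u == J) F u = \sum_(r : 'I_(n J)) F (Tagged (fun j => 'I_(n j)) r).
Proof.
rewrite (reindex (fun r : 'I_(n J) => Tagged (fun j => 'I_(n j)) r)) /=.
  by apply: eq_bigl => r; rewrite eqxx.
exists (fun u : V => insubd (Ordinal (hn J)) (vn u)) => [r _|u].
  by rewrite /vn /= valKd.
rewrite inE; case: u => j r /= /eqP Ej; subst j; by rewrite /vn /= valKd.
Qed.


Lemma mE_ord p q (a : 'I_p) (b : 'I_q) (M : 'M[R]_(p,q)) a' b' :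
  a' = val a -> b' = val b -> mE M a' b' = M a b.
Proof. by move=> -> ->; exact: mEE. Qed.

Lemma chainS_mE m a b :
  mE (chain B m.+1) a b =
  \sum_(r : 'I_(n (idx hk m))) mE (chain B m) a r * mE (B (idx hk m)) r b.
Proof.
have [/andP [ha hb]|hab] := boolP ((a < n (idx hk 0)) && (b < n (idx hk m.+1)))%N.
  rewrite (@mE_ord _ _ (Ordinal ha) (Ordinal hb)) //= !mxE.
  apply: eq_bigr => r _; rewrite castmxE /= cast_ord_id.
  by rewrite (@mE_ord _ _ (Ordinal ha) r) // (@mE_ord _ _ (r) (cast_ord (esym (congr1 n (idxS hk m))) (Ordinal hb))).
rewrite mE_out //; move: hab; rewrite negb_and => /orP [ha|hb].
  by rewrite big1 // => r _; rewrite mE_out ?mul0r // (negbTE ha).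
rewrite big1 // => r _; rewrite [mE (B _) _ _]mE_out ?mulr0 //.
by rewrite -idxS in hb; rewrite (negbTE hb) andbF.
Qed.

Lemma chain1_mE a b : mE (chain B 1) a b = mE (B (idx hk 0)) a b.
Proof.
rewrite chainS_mE /=.
have [ha|ha] := boolP (a < n (idx hk 0))%N.
  rewrite (bigD1 (Ordinal ha)) //= big1 ?addr0.
    rewrite (@mE_ord _ _ (Ordinal ha) (Ordinal ha)) // mxE eqxx mul1r.
    done.
  move=> r /negbTE hr; rewrite (@mE_ord _ _ (Ordinal ha) (r)) // mxE.
  by rewrite eq_sym hr mul0r.
rewrite big1; last by move=> r _; rewrite mE_out ?mul0r // (negbTE ha).
by rewrite mE_out // (negbTE ha).
Qed.

Definition orig (u w : V) : R :=
  if tag w == nextl hk (tag u) then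
    (if nat_of_ord (tag u) == k.-1 then (if inS w then mE (B (tag u)) (vn u) (vn w) else 0)
     else - mE (B (tag u)) (vn u) (vn w))
  else 0.

Definition zf (m : nat) (u w : V) : R :=
  if inS u then
    (if (m < k)%N then (if tag w == idx hk m then - mE (chain B m) (vn u) (vn w) else 0)
     else if inS w then mE (chain B m) (vn u) (vn w) else 0)
  else if (nat_of_ord (tag u) < m)%N then (u == w)%:R
  else (u == w)%:R + orig u w.

Definition Zm m : 'M[R]_N := \matrix_(i, j) zf m (vert i) (vert j).

Lemma val_idx m : (m < k)%N -> val (idx hk m) = m.
Proof. by move=> H; rewrite /= modn_small. Qed.

Lemma val_nextl (j : 'I_k) : val (nextl hk j) = (if j.+1 == k then 0 else j.+1)%N.
Proof.
rewrite /= ; case: eqP => [->|H]; first by rewrite modnn.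
by rewrite modn_small // ltn_neqAle; apply/andP; split; [apply/eqP|exact: ltn_ord].
Qed.

Lemma nextl_neq (j : 'I_k) : (1 < k)%N -> nextl hk j != j.
Proof.
move=> k1; apply/negP => /eqP /(congr1 val); rewrite val_nextl.
case: eqP => [E|_ /eqP]; last by rewrite eqn_leq ltnn.
move=> H; move: E; rewrite -H; lia.
Qed.

Lemma eq_Tag (j : 'I_k) (r r' : 'I_(n j)) :
  (Tagged (fun j => 'I_(n j)) r == Tagged (fun j => 'I_(n j)) r') = (r == r').
Proof.
apply/eqP/eqP => [E|->//]; exact: eq_from_Tagged E.
Qed.

Lemma sum_delta (J : 'I_k) (F : 'I_(n J) -> R) (w : V) (G : nat -> R) :
  (forall r : 'I_(n J), F r = G r) ->
  \sum_(r : 'I_(n J)) F r * (Tagged (fun j => 'I_(n j)) r == w)%:R =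
  if tag w == J then G (vn w) else 0.
Proof.
move=> FG; case: w => j r' /=; case: eqP => [Ej|Nj].
  subst j; rewrite (bigD1 r') //= eqxx mulr1 big1 ?addr0 ?FG //.
  by move=> r /negbTE Hr; rewrite eq_Tag Hr mulr0.
apply: big1 => r _; case: eqP => [E|]; last by rewrite mulr0.
by exfalso; apply: Nj; move: (congr1 tag E).
Qed.

Section Trans.
Variable m : nat.
Hypothesis m1 : (0 < m)%N.
Hypothesis mk : (m < k)%N.
Let J := idx hk m.

Lemma valJ : val J = m. Proof. exact: val_idx. Qed.
Lemma J_neq0 : (J == idx hk 0) = false.
Proof. apply/negbTE/negP => /eqP /(congr1 val); rewrite valJ /= mod0n; lia. Qed.
Lemma k1 : (1 < k)%N. Proof. lia. Qed.
Lemma inS_notJ u : inS u -> (tag u == J) = false.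
Proof. by move/inS_tag => ->; rewrite eq_sym J_neq0. Qed.

Lemma orig_tagJ u w : tag u = J -> orig u w =
  if tag w == idx hk m.+1 then
    (if m == k.-1 then (if inS w then mE (B J) (vn u) (vn w) else 0)
     else - mE (B J) (vn u) (vn w)) else 0.
Proof. case: u => j r /= Hj; subst j; rewrite /orig /= modn_small //.
have -> : (tag w == nextl hk J) = (tag w == idx hk m.+1) by rewrite /J idxS.
by []. Qed.

Lemma orig_notJ u w : tag w = J -> ~~ (nat_of_ord (tag u) < m)%N -> orig u w = 0.
Proof.
move=> Hw Hu; rewrite /orig Hw; case: eqP => // E.
move: (congr1 val E); rewrite valJ val_nextl; case: eqP => _ ?; exfalso; lia.
Qed.

Lemma zf_J u w : tag u = J -> zf m u w = (u == w)%:R + orig u w.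
Proof.
move=> Hu; rewrite /zf; have -> : inS u = false by apply/negbTE/negP => /inS_tag; rewrite Hu => /eqP; rewrite J_neq0.
by rewrite Hu valJ ltnn.
Qed.

Definition Em : 'M[R]_N := \matrix_(i, j) ((i == j)%:R +
  (if inS (vert i) && (tag (vert j) == J) then mE (chain B m) (vn (vert i)) (vn (vert j)) else 0)).
Definition Fm : 'M[R]_N := \matrix_(i, j) ((i == j)%:R -
  (if (tag (vert i) == J) && (i != j) then zf m (vert i) (vert j) else 0)).

Lemma exists_moved (s : 'S_N) : s != 1%g -> exists i, s i != i.
Proof.
move=> Hs; apply/existsP; apply: contraR Hs; rewrite negb_exists => /forallP H.
by apply/eqP/permP => i; rewrite perm1; move: (H i); rewrite negbK => /eqP.
Qed.

Lemma det_Em : \det Em = 1.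
Proof.
apply: det_unip => [i|s /exists_moved [i Hi]].
  rewrite mxE eqxx; case: ifP => [/andP [H1 H2]|]; last by rewrite addr0.
  by rewrite (inS_notJ H1) in H2.
have [E0|] := eqVneq (Em i (s i)) 0; first by exists i.
rewrite mxE (eq_sym i) (negbTE Hi) add0r; case: ifP => [/andP [_ Ht] _|]; last by rewrite eqxx.
exists (s i); rewrite mxE; case: eqP => [E|_].
  by rewrite -(perm_inj E) eqxx in Hi.
case: ifP => [/andP [H1 _]|]; last by rewrite addr0.
by rewrite (inS_notJ H1) in Ht.
Qed.

Lemma det_Fm : \det Fm = 1.
Proof.
apply: det_unip => [i|s /exists_moved [i Hi]].
  by rewrite mxE eqxx andbF subr0.
have [E0|] := eqVneq (Fm i (s i)) 0; first by exists i.
rewrite mxE (eq_sym i) (negbTE Hi) sub0r; case: ifP => [/andP [/eqP Ht _] Hz|]; last by rewrite oppr0 eqxx.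
exists (s i); rewrite mxE; case: eqP => [E|_].
  by rewrite -(perm_inj E) eqxx in Hi.
case: ifP => [/andP [/eqP Ht2 _]|]; last by rewrite subr0.
exfalso; move: Hz.
rewrite zf_J // (inj_eq vert_inj) (eq_sym i) (negbTE Hi) add0r oppr_eq0 /orig Ht Ht2.
by have := nextl_neq J k1; rewrite eq_sym => /negbTE ->; rewrite eqxx.
Qed.

Lemma sum_kron (N' : nat) (i : 'I_N') (F : 'I_N' -> R) :
  \sum_l (i == l)%:R * F l = F i.
Proof.
rewrite (bigD1 i) //= eqxx mul1r big1 ?addr0 // => l /negbTE Hl.
by rewrite eq_sym Hl mul0r.
Qed.

Lemma sum_orig (a : nat) (w : V) :
  \sum_(r : 'I_(n J)) mE (chain B m) a (vn (Tagged (fun j0 : 'I_k => 'I_(n j0)) r)) *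
     orig (Tagged (fun j0 : 'I_k => 'I_(n j0)) r) w =
  (if (m.+1 < k)%N
   then if tag w == idx hk m.+1 then - mE (chain B m.+1) a (vn w) else 0
   else if inS w then mE (chain B m.+1) a (vn w) else 0).
Proof.
under eq_bigr do rewrite orig_tagJ //.
rewrite chainS_mE.
case Hw: (tag w == idx hk m.+1); last first.
  rewrite big1; last by move=> r _; rewrite /= mulr0.
  case: ifP => // Hm; case Hs: (inS w) => //; move/inS_tag: Hs => Hw0.
  exfalso; move: Hw; rewrite Hw0; have Hk : m.+1 = k by lia.
  by rewrite (_ : idx hk 0 = idx hk m.+1) ?eqxx //; apply: val_inj; rewrite /= Hk modnn mod0n.
case: ifP => Hm.
  have -> : (m == k.-1) = false by apply/negbTE; lia.
  by rewrite -sumrN; apply: eq_bigr => r _; rewrite mulrN.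
have -> : (m == k.-1) = true by apply/eqP; lia.
case: (inS w); last by rewrite big1 // => r _; rewrite mulr0.
done.
Qed.

Lemma Y_entry i j : (Em *m Zm m) i j =
  if inS (vert i) then zf m.+1 (vert i) (vert j) else zf m (vert i) (vert j).
Proof.
rewrite mxE.
under eq_bigr do rewrite mxE mulrDl.
rewrite big_split /= sum_kron mxE.
case: ifP => HS; last first.
  by rewrite big1 ?addr0 // => l _; rewrite mul0r.
under eq_bigr do rewrite /= (fun_if (fun x => x * _)) mul0r.
rewrite -big_mkcond /=.
have -> : \sum_(l | tag (vert l) == J) mE (chain B m) (vn (vert i)) (vn (vert l)) * Zm m l j
  = \sum_(u | tag u == J) mE (chain B m) (vn (vert i)) (vn u) * zf m u (vert j).
  by rewrite sum_vert; apply: eq_bigr => l _; rewrite mxE.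
rewrite sum_layer.
under eq_bigr do rewrite zf_J // mulrDr.
rewrite big_split /=.
rewrite (@sum_delta J (fun r => mE (chain B m) (vn (vert i)) r) _ (mE (chain B m) (vn (vert i)))) //.
rewrite /zf HS mk; case: ifP => _; rewrite ?addrA ?addNr ?add0r; exact: sum_orig.
Qed.

Lemma J_neqS : (J == idx hk m.+1) = false.
Proof.
apply/negbTE/eqP => E; have := congr1 val E; rewrite valJ /=.
case: (ltngtP m.+1 k) => H; first by rewrite modn_small //; lia.
  lia.
rewrite H modnn; lia.
Qed.

Lemma YF_simple (Y : 'M[R]_N) i j : (forall l, tag (vert l) == J -> Y i l = 0) ->
  (Y *m Fm) i j = Y i j.
Proof.
move=> HY; rewrite mxE (bigD1 j) //= mxE eqxx andbF subr0 mulr1 big1 ?addr0 //.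
move=> l /negbTE Hl; rewrite mxE Hl sub0r.
by case: ifP => [/andP [/HY -> _]|_]; rewrite ?mul0r ?oppr0 ?mulr0.
Qed.

Lemma Y_zero_J i l : ~~ (tag (vert i) == J) -> tag (vert l) == J ->
  (Em *m Zm m) i l = 0.
Proof.
move=> Hi /eqP Hl; rewrite Y_entry /zf.
case HS: (inS (vert i)) => /=.
  case: ifP => _; first by rewrite Hl J_neqS.
  case: ifP => // /inS_tag; rewrite Hl => /eqP; by rewrite J_neq0.
case: ifP => Hlt.
  case: eqP => // E; by move: Hi; rewrite E Hl eqxx.
rewrite orig_notJ // ?Hlt // addr0; case: eqP => // E; by move: Hi; rewrite E Hl eqxx.
Qed.

Lemma zf_JJ u w : tag u = J -> tag w = J -> zf m u w = (u == w)%:R.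
Proof. by move=> Hu Hw; rewrite zf_J // orig_notJ ?addr0 // Hu valJ ltnn. Qed.

Lemma YF_J i j : tag (vert i) = J -> (Em *m Zm m *m Fm) i j = (vert i == vert j)%:R.
Proof.
move=> Hi.
have HY : forall l, (Em *m Zm m) i l = zf m (vert i) (vert l).
  move=> l; rewrite Y_entry; case: ifP => // /inS_tag; rewrite Hi => /eqP.
  by rewrite J_neq0.
rewrite mxE.
under eq_bigr do rewrite HY mxE mulrBr.
rewrite sumrB.
have -> : \sum_l zf m (vert i) (vert l) * (l == j)%:R = zf m (vert i) (vert j).
  rewrite (bigD1 j) //= eqxx mulr1 big1 ?addr0 // => l /negbTE Hl.
  by rewrite Hl mulr0.
rewrite (bigD1 i) //= big1 ?addr0; last first.
  move=> l /negbTE Hl; case: ifP => [/andP [/eqP Hl2 _]|]; last by rewrite mulr0.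
  by rewrite zf_JJ // (inj_eq vert_inj) eq_sym Hl mul0r.
rewrite Hi eqxx /= (zf_JJ Hi Hi) eqxx mul1r (inj_eq vert_inj).
case: eqP => [<-|_] /=; first by rewrite subr0 (zf_JJ Hi Hi) eqxx.
by rewrite subrr.
Qed.

Lemma Zm_step : Zm m.+1 = Em *m Zm m *m Fm.
Proof.
apply/matrixP => i j.
have [/eqP Hi|Hi] := boolP (tag (vert i) == J).
  rewrite YF_J // mxE /zf.
  have -> : inS (vert i) = false by apply/negbTE/negP => /inS_tag; rewrite Hi => /eqP; rewrite J_neq0.
  by rewrite Hi valJ ltnSn.
rewrite YF_simple; last by move=> l; exact: Y_zero_J.
rewrite Y_entry mxE; case HS: (inS (vert i)) => //.
rewrite /zf HS; have Hne : nat_of_ord (tag (vert i)) != m.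
  by apply: contra Hi => /eqP E; apply/eqP/val_inj; rewrite valJ.
case: (ltngtP (tag (vert i)) m) => H.
- by rewrite ltnS ltnW.
- by rewrite ltnS leqNgt H.
- by move: Hne; rewrite H eqxx.
Qed.

Lemma det_step : \det (Zm m.+1) = \det (Zm m).
Proof. by rewrite Zm_step !det_mulmx det_Em det_Fm mul1r mulr1. Qed.

End Trans.

Lemma vert_l (a : 'I_#|S|) : vert (lshift #|Rset| a) =
  Tagged (fun j => 'I_(n j)) (@enum_val _ (mem S) a).
Proof. by rewrite /vert (unsplitK (inl _ a)). Qed.

Lemma vert_r (b : 'I_#|Rset|) : vert (rshift #|S| b) = @enum_val _ (mem Rset) b.
Proof. by rewrite /vert (unsplitK (inr _ b)). Qed.

Lemma inS_r (b : 'I_#|Rset|) : inS (@enum_val _ (mem Rset) b) = false.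
Proof. by have := enum_valP b; rewrite !inE => /negbTE. Qed.

Lemma Zm_final : Zm k = block_mx (principal_submx (prodmx B) S) 0 0 1%:M.
Proof.
apply/matrixP => i j; rewrite mxE -(splitK i) -(splitK j).
case: (split i) => a; case: (split j) => b /=.
- rewrite block_mxEul vert_l vert_l /zf !inS_tag0 !enum_valP ltnn.
  rewrite /principal_submx mxE /prodmx castmxE.
  by apply: mE_ord.
- by rewrite block_mxEur mxE vert_l vert_r /zf inS_tag0 enum_valP ltnn inS_r.
- rewrite block_mxEdl mxE vert_l vert_r /zf inS_r ltn_ord.
  case: eqP => // E; move: (inS_r a); rewrite E inS_tag0 enum_valP //.
- rewrite block_mxEdr vert_r vert_r /zf inS_r ltn_ord !mxE (inj_eq enum_val_inj).
  done.
Qed.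

Lemma det_final : \det (Zm k) = \det (principal_submx (prodmx B) S).
Proof. by rewrite Zm_final det_ublock det1 mulr1. Qed.

Lemma det_chain m : (0 < m)%N -> (m <= k)%N -> \det (Zm 1) = \det (Zm m).
Proof.
elim: m => // m IH _ Hm.
case: (posnP m) => [->//|m0].
by rewrite [RHS]det_step // IH // ltnW.
Qed.

Section Cyc.
Variable A : forall j : 'I_k, 'M[R]_(n j, n (nextl hk j)).
Hypothesis hQ : forall j, inQ (A j) (B j).
Hypothesis hE : e_cycle_free A.

Lemma mE_Q p q (M X : 'M[R]_(p,q)) : inQ M X -> forall a b,
  (0 < mE M a b -> 0 < mE X a b) /\ (mE M a b < 0 -> mE X a b < 0) /\
  (mE M a b = 0 -> mE X a b = 0).
Proof.
move=> H a b; rewrite /mE.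
case: (@insub _ (fun x => x < p)%N _ a) => [a'|]; last by rewrite ltxx.
case: (@insub _ (fun x => x < q)%N _ b) => [b'|]; last by rewrite ltxx.
exact: H.
Qed.

Lemma wQ u w : (0 < weight A u w -> 0 < weight B u w) /\
  (weight A u w < 0 -> weight B u w < 0) /\ (weight A u w = 0 -> weight B u w = 0).
Proof.
rewrite /weight; case: ifP => _; last by rewrite ltxx.
exact: mE_Q.
Qed.

Lemma wB_neq0 u w : weight B u w != 0 ->
  weight A u w != 0 /\ (weight B u w < 0) = (weight A u w < 0).
Proof.
have [h1 [h2 h3]] := wQ u w => HB.
case: (ltrgtP (weight A u w) 0) => H.
- by split => //; rewrite (h2 H).
- by split => //; rewrite (lt_gtF (h1 H)).
- by move: HB; rewrite h3 ?eqxx.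
Qed.

Definition sg (u : V) : R := if nat_of_ord (tag u) == k.-1 then 1 else -1.

Lemma Zshape u w : zf 1 u w != 0 ->
  (u = w /\ zf 1 u w = 1) \/ zf 1 u w = sg u * weight B u w.
Proof.
rewrite /zf; case HS: (inS u).
  case: u HS => j r HS; have tu := inS_tag HS; simpl in tu; subst j.
  case: ifP => Hk1.
    case: ifP => Hw; last by rewrite eqxx.
    move=> _; right; rewrite chain1_mE /sg /weight /= mod0n.
    have -> : (0 == k.-1)%N = false by apply/negbTE; lia.
    have -> : (tag w == nextl hk (idx hk 0)) = true by rewrite idxS.
    by rewrite mulN1r.
  case: ifP => Hw; last by rewrite eqxx.
  move=> _; right; rewrite chain1_mE /sg /weight /= mod0n.
  have -> : (0 == k.-1)%N = true by apply/eqP; lia.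
  have -> : (tag w == nextl hk (idx hk 0)) = true.
    apply/eqP/ord_inj; have := ltn_ord (tag w); have := ltn_ord (nextl hk (idx hk 0)); lia.
  by rewrite mul1r.
case: ifP => Hlt.
  case: (eqVneq u w) => [<-|Hne]; first by left.
  by rewrite eqxx.
have k1 : (1 < k)%N by have := ltn_ord (tag u); lia.
case: (eqVneq u w) => [<-|Hne].
  move=> _; left; split => //; rewrite /orig.
  by have := nextl_neq (tag u) k1; rewrite eq_sym => /negbTE ->; rewrite addr0.
rewrite add0r => Ho; right; move: Ho; rewrite /orig /sg /weight.
case: ifP => Hn; last by rewrite eqxx.
case: ifP => _; last by rewrite mulN1r.
by case: ifP => _; rewrite ?eqxx // mul1r.
Qed.

Lemma arc_tag u w : Defs.arc A u w -> nextl hk (tag u) == tag w.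
Proof. by rewrite /Defs.arc /weight; case: ifP => [H _|_]; rewrite ?eqxx // eq_sym. Qed.

Lemma genuine (s : 'S_N) x :
  (forall y, y \in traject s x #|porbit s x| ->
     Zm 1 y (s y) = sg (vert y) * weight B (vert y) (vert (s y)) /\
     weight B (vert y) (vert (s y)) != 0) ->
  0 <= (-1) ^+ (#|porbit s x|).+1 * \prod_(y <- traject s x #|porbit s x|) Zm 1 y (s y).
Proof.
set L := #|porbit s x|; set c := traject s x L => Hg.
have L0 : (0 < L)%N by rewrite lt0n card_porbit_neq0.
have Hit : iter L s x = x by exact: iter_porbit.
have Hu : uniq c by exact: uniq_traject_porbit.
have Hrot : rot 1 c = map s c by exact: traject_rot.
set cv := map vert c.
have Hsz : size cv = L by rewrite size_map size_traject.
have Harcs : zip cv (rot 1 cv) = map (fun y => (vert y, vert (s y))) c.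
  by rewrite -map_rot Hrot -map_comp zip_map.
have Hcyc : cycle (Defs.arc A) cv.
  rewrite cycle_map; apply: (sub_in_cycle (P := mem c) (e := frel s)).
  - move=> y z Hy _ /eqP <-; rewrite /relpre /=.
    by have [H _] := wB_neq0 (Hg y Hy).2.
  - by apply/allP.
  - exact: traject_cycle.
have Hdi : dicycle A cv.
  apply/and3P; split => //.
    by rewrite -size_eq0 Hsz -lt0n.
  by rewrite map_inj_uniq //; exact: vert_inj.
have Hodd : odd (size cv %/ k + neg_arcs A cv).
  apply/negPn/negP => Hev; apply: (hE (c := cv)); split => //.
  by rewrite -signr_odd (negbTE Hev) expr0.
have Hneg : neg_arcs A cv = count (fun y => weight B (vert y) (vert (s y)) < 0) c.
  rewrite /neg_arcs /cycle_arcs Harcs count_map; apply: eq_in_count => y Hy /=.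
  by rewrite (wB_neq0 (Hg y Hy).2).2.
have Hlay : count (fun y => nat_of_ord (tag (vert y)) == k.-1) c = (L %/ k)%N.
  have kk : (k.-1 < k)%N by rewrite prednK.
  rewrite -Hsz -(size_map tag cv) -(layer_count (Ordinal kk)).
  - by rewrite count_map /cv count_map.
  - by rewrite -size_eq0 size_map Hsz -lt0n.
  - rewrite cycle_map; apply: sub_cycle Hcyc => u w /= H.
    exact: arc_tag.
rewrite Hsz in Hodd.
have -> : \prod_(y <- c) Zm 1 y (s y) =
   \prod_(y <- c) (if nat_of_ord (tag (vert y)) == k.-1 then 1 else -1 : R) *
   \prod_(y <- c) weight B (vert y) (vert (s y)).
  rewrite -big_split /=; apply: eq_big_seq => y Hy; by rewrite (Hg y Hy).1.
rewrite prod_sgn prod_abs -Hneg.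
have -> : count (fun i => ~~ (nat_of_ord (tag (vert i)) == k.-1)) c = (L - L %/ k)%N.
  have H := count_predC (fun y => nat_of_ord (tag (vert y)) == k.-1) c.
  rewrite size_traject in H; by rewrite -Hlay -H addKn.
rewrite !mulrA -!exprD.
have -> : (L.+1 + (L - L %/ k) + neg_arcs A cv = (L %/ k + neg_arcs A cv).+1 + 2 * (L - L %/ k))%N.
  by have := leq_div L k; lia.
rewrite -signr_odd oddD oddS Hodd oddM /= expr0 mul1r.
apply: prodr_ge0 => y _; exact: normr_ge0.
Qed.

Lemma porbit_fix (s : 'S_N) y : s y = y -> porbit s y = [set y].
Proof.
move=> Hy; apply/setP => z; rewrite inE; apply/idP/eqP => [/porbitP [i ->]|->].
  by elim: i => [|i IH]; rewrite ?expg0 ?perm1 // expgSr permM IH.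
exact: porbit_id.
Qed.

Lemma orbit_ge0 (s : 'S_N) x :
  0 <= (-1) ^+ (#|porbit s x|).+1 * \prod_(i in porbit s x) Zm 1 i (s i).
Proof.
have -> : \prod_(i in porbit s x) Zm 1 i (s i) =
          \prod_(i <- traject s x #|porbit s x|) Zm 1 i (s i).
  by rewrite big_uniq ?uniq_traject_porbit //; apply: eq_bigl => i; exact: porbit_traject.
have [/hasP [y Hy /eqP H0]|Hall] := boolP (has (fun y => Zm 1 y (s y) == 0) (traject s x #|porbit s x|)).
  by rewrite (big_rem y) //= H0 mul0r mulr0.
have [/andP [/eqP Hx /eqP H1]|Hnf] := boolP ((s x == x) && (Zm 1 x x == 1)).
  rewrite porbit_fix // cards1 /= big_cons big_nil Hx H1 mulr1.
  by rewrite expr2 mulN1r opprK mulr1 ler01.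
apply: genuine => y Hy.
have Hnz : Zm 1 y (s y) != 0.
  by apply: contraNN Hall => H; apply/hasP; exists y.
move: Hnz; rewrite mxE => Hnz.
case: (Zshape Hnz) => [[/vert_inj Hfix H1]|Heq].
  exfalso; move/negP: Hnf; apply.
  have Hyp : y \in porbit s x by rewrite porbit_traject.
  have : x \in porbit s y by rewrite porbit_sym.
  rewrite porbit_fix -?Hfix // inE => /eqP Exy.
  by rewrite -Hfix in H1; rewrite Exy -Hfix eqxx /= mxE H1 eqxx.
split; first exact: Heq.
by apply/eqP => H0; move: Hnz; rewrite Heq H0 mulr0 eqxx.
Qed.

Lemma det_Z1_ge0 : 0 <= \det (Zm 1).
Proof. apply: det_ge0_orbits => s x; exact: orbit_ge0. Qed.

End Cyc.

End Main.


Theorem corollary4 (R : realType) (k : nat) (hk : (0 < k)%N) (n : 'I_k -> nat)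
  (hn : forall j, (0 < n j)%N)
  (A : forall j : 'I_k, 'M[R]_(n j, n (nextl hk j))) :
  e_cycle_free A ->
  forall B : forall j : 'I_k, 'M[R]_(n j, n (nextl hk j)),
    (forall j, inQ (A j) (B j)) ->
    P0 (prodmx B).
Proof.
move=> hE B hQ S.
rewrite -(det_final hn B S) -(det_chain hn B S hk (leqnn k)).
exact: det_Z1_ge0 hQ hE.
Qed.
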